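(* Let $D$ be a squarefree integer and $p>3$ a prime not dividing $D$. Then the reductions modulo $p$ of the equations $X_0^2-2X_1^2+X_2^2=0$, $X_1^2-2X_2^2+DX_3^2=0$, $X_2^2-2DX_3^2+X_4^2=0$ define a smooth curve over $\mathbb{F}_p$; i.e. $C_D$ has good reduction at $p$ with these equations.
   Context: $C_D\subset\mathbb{P}^4$ is the curve over $\mathbb{Q}$ defined by these three equations. *)

(* Defs.v *)
From mathcomp Require Import all_boot all_algebra all_field.
From mathcomp Require Import mpoly.
Set Implicit Arguments. Unset Strict Implicit. Unset Printing Implicit Defensive.
Import GRing.Theory.
Local Open Scope ring_scope.

(* An integer D is squarefree: no square of an integer m > 1 divides it.
   (D = 0 is not squarefree since every m*m divides 0.) *)
Definition squarefree_int (D : int) : Prop :=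
  forall m : nat, (m * m %| `|D|)%N -> m = 1%N.

(* The three quadrics defining C_D in P^4, with coefficients in a ring K
   (D mapped into K via the canonical map Z -> K, i.e. reduced mod char K). *)
Definition CD_eqs (K : comRingType) (D : int) (i : 'I_3) : {mpoly K[5]} :=
  let X := fun j : nat => 'X_(inord j) : {mpoly K[5]} in
  match val i with
  | 0 => X 0 ^+ 2 - 2%:R *: X 1 ^+ 2 + X 2 ^+ 2
  | 1 => X 1 ^+ 2 - 2%:R *: X 2 ^+ 2 + (D%:~R) *: X 3 ^+ 2
  | _ => X 2 ^+ 2 - (2 * D)%:~R *: X 3 ^+ 2 + X 4 ^+ 2
  end.

Definition CD_jacobian (K : comRingType) (D : int) (x : 'I_5 -> K) : 'M[K]_(3, 5) :=
  \matrix_(i < 3, j < 5) ((CD_eqs K D i)^`M(j)).@[x].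

(* The projective scheme in P^4_F_p cut out by the equations is a smooth curve:
   it is a complete intersection of 3 hypersurfaces in P^4, and by the Jacobian
   criterion it is smooth (of dimension 1) iff at every geometric point, i.e.
   every nonzero x over every algebraically closed field of characteristic p
   satisfying the equations, the Jacobian has full rank 3. *)
Definition good_reduction_CD (D : int) (p : nat) : Prop :=
  forall (K : closedFieldType) (x : 'I_5 -> K),
    p \in [pchar K] ->
    (exists j, x j != 0) ->
    (forall i, (CD_eqs K D i).@[x] = 0) ->
    \rank (CD_jacobian D x) = 3%N.

(* Main.v *)
Require Import Defs.
From mathcomp Require Import all_boot all_algebra all_field.
From mathcomp Require Import mpoly.
From mathcomp Require Import ring.
Local Open Scope ring_scope.
Import GRing.Theory.

Lemma mderivXU (K : comRingType) n (i j : 'I_n) :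
  ('X_i : {mpoly K[n]})^`M(j) = ((i == j)%:R)%:MP.
Proof.
rewrite mderivX mnm1E; case: eqP => [<-|_]; last by rewrite scale0r.
have -> : (U_(i) - U_(i) = 0)%MM by apply/mnmP=> k; rewrite mnmBE subnn mnm0E.
by rewrite mpolyX0 scale1r mpolyC1.
Qed.

Lemma inordE5 k j : (k < 5)%N -> (j < 5)%N -> ((inord k : 'I_5) == inord j) = (k == j).
Proof. by move=> hk hj; rewrite -val_eqE /= !inordK. Qed.

Lemma cancel_l {K : fieldType} {u w : K} : u * w = 0 -> u != 0 -> w = 0.
Proof. by move/eqP; rewrite mulf_eq0 => /orP[/eqP->|/eqP//]; rewrite eqxx. Qed.

Lemma cancel_r {K : fieldType} {u w : K} : u * w = 0 -> w != 0 -> u = 0.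
Proof. by rewrite mulrC; apply: cancel_l. Qed.

Lemma eq_of_sub {K : fieldType} {u w : K} : u - w = 0 -> u = w.
Proof. by move/eqP; rewrite subr_eq0 => /eqP. Qed.

Lemma key (K : fieldType) (a b c s t : K) : (2:K) != 0 -> (3:K) != 0 ->
  a*(3*s-2*t)=0 -> (b-2*a)*(2*s-t)=0 -> (a-2*b+c)*s=0 -> (b-2*c)*t=0 ->
  c*(2*t-s)=0 -> (s != 0) || (t != 0) -> [/\ a = 0, b = 0 & c = 0].
Proof.
move=> n2 n3 g0 g1 g2 g3 g4.
have [s00|s0] := eqVneq s 0.
  move: g0 g1 g2 g3 g4; rewrite s00 => g0 g1 g2 g3 g4.
  move=> /= t0.
  have a0 : a = 0 by apply: (cancel_r g0 _); rewrite mulr0 add0r oppr_eq0 mulf_neq0.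
  have b0 : b = 0.
    apply: (cancel_r (w := 2*0-t)); last by rewrite mulr0 add0r oppr_eq0.
    by rewrite -[RHS]g1 a0; ring.
  have c0 : c = 0.
    have : 2 * c = 0.
      apply/eqP; rewrite -oppr_eq0; apply/eqP.
      by apply: (cancel_r (w := t)) => //; rewrite -[RHS]g3 b0; ring.
    by move/eqP; rewrite mulf_eq0 (negPf n2) => /eqP.
  by [].
move=> _.
have hc : c = 2*b - a.
  apply: eq_of_sub; apply: (cancel_r (w := s)) => //; rewrite -[RHS]g2; ring.
have [t0|t0] := eqVneq t 0.
  have a0 : a = 0.
    apply: (cancel_r (w := 3*s)); [by rewrite -[RHS]g0 t0; ring | by rewrite mulf_neq0].
  have b0 : b = 0.
    apply: (cancel_r (w := 2*s)); [by rewrite -[RHS]g1 t0 a0; ring | by rewrite mulf_neq0].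
  by split=> //; rewrite hc a0 b0; ring.
have h23 : 2*a = 3*b.
  apply: eq_of_sub; apply: (cancel_r (w := t)) => //; rewrite -[RHS]g3 hc; ring.
have [b0|b0] := eqVneq b 0.
  have a0 : a = 0.
    by apply: (cancel_l (u := 2)) => //; rewrite h23 b0 mulr0.
  by split=> //; rewrite hc a0 b0; ring.
exfalso.
have a0 : a != 0.
  by apply/eqP=> a0; move: h23; rewrite a0 mulr0 => /esym/eqP; rewrite mulf_eq0 (negPf n3) (negPf b0).
have e1 : 2*s - t = 0.
  apply: (cancel_l (u := b - 2*a)) => //.
  have -> : b - 2*a = - 2 * b by rewrite h23; ring.
  by rewrite mulf_neq0 // oppr_eq0.
have e0 : 3*s - 2*t = 0 by apply: (cancel_l g0).
move/negP: s0; apply; apply/eqP.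
have -> : s = 2*(2*s - t) - (3*s - 2*t) by ring.
by rewrite e1 e0; ring.
Qed.

Lemma nat_neq0 (K : fieldType) (p n : nat) : p \in [pchar K] -> (0 < n)%N -> (n < p)%N ->
  (n%:R : K) != 0.
Proof.
move=> Hp n0 np; rewrite -(dvdn_pcharf Hp n); apply/negP => /(dvdn_leq n0).
by rewrite leqNgt np.
Qed.

Theorem lemma4p3 (D : int) (p : nat) :
  squarefree_int D -> prime p -> (3 < p)%N -> ~~ (p %| `|D|)%N ->
  good_reduction_CD D p.
Proof.
move=> _ pr p3 pD K x Hp [j xj] Heq.
have n2 : (2:K) != 0 by apply: (@nat_neq0 K p 2 Hp) => //; apply: ltn_trans p3.
have n3 : (3:K) != 0 by apply: (@nat_neq0 K p 3 Hp).
have nd : (D%:~R : K) != 0.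
  clear -pD Hp; move: pD; case: D => n /=.
    by rewrite (_ : n%:~R = n%:R) // -(dvdn_pcharf Hp n).
  by rewrite NegzE rmorphN /= (_ : (n.+1)%:~R = (n.+1)%:R) // oppr_eq0 -(dvdn_pcharf Hp).
apply/eqP; rewrite -[3%N]/(3%N) ; apply/eqP.
suff : row_free (CD_jacobian D x) by move/eqP.
apply: inj_row_free => v Hv.
Ltac jac Hv j := have := congr1 (fun M : 'M[_]_(1,5) => M 0 (inord j)) Hv;
rewrite !mxE !big_ord_recl big_ord0 !mxE /CD_eqs /=;
rewrite !(mderivD, mderivB, mderivN, mderivZ, expr2, mderivM, mderivXU);
rewrite !(mevalD, mevalB, mevalN, mevalZ, mevalM, mevalC, mevalXU) !inordE5 //= intrM.
jac Hv 0%N. jac Hv 1%N. jac Hv 2%N. jac Hv 3%N. jac Hv 4%N.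
set a := v 0 ord0. set b := v 0 (lift ord0 ord0). set c := v 0 (lift ord0 (lift ord0 ord0)).
set x0 := x (inord 0). set x1 := x (inord 1). set x2 := x (inord 2). set x3 := x (inord 3). set x4 := x (inord 4). set d : K := D%:~R.
move=> e4 e3 e2 e1 e0.
have h0 : 2 * (a*x0) = 0 by rewrite -[RHS]e0 /a /x0; ring.
have h1 : 2 * ((b - 2*a)*x1) = 0 by rewrite -[RHS]e1 /a /b /x1; ring.
have h2 : 2 * ((a - 2*b + c)*x2) = 0 by rewrite -[RHS]e2 /a /b /c /x2; ring.
have h3 : 2 * ((b - 2*c)*(d*x3)) = 0 by rewrite -[RHS]e3 /b /c /x3 /d; ring.
have h4 : 2 * (c*x4) = 0 by rewrite -[RHS]e4 /c /x4; ring.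
move: (cancel_l h0 n2) (cancel_l h1 n2) (cancel_l h2 n2) (cancel_l h3 n2) (cancel_l h4 n2).
move=> {h0 h1 h2 h3 h4 e0 e1 e2 e3 e4} h0 h1 h2 h3 h4.
have := Heq (Ordinal (isT : (0 < 3)%N)); have := Heq (Ordinal (isT : (1 < 3)%N));
have := Heq (Ordinal (isT : (2 < 3)%N)).
rewrite /CD_eqs /= !(mevalD, mevalB, mevalN, mevalZ, expr2, mevalM, mevalXU) intrM.
rewrite -/x0 -/x1 -/x2 -/x3 -/x4 -/d.
move=> E2 E1 E0.
have sq0 : forall y : K, y * y = 0 -> y = 0.
  by move=> y /eqP; rewrite mulf_eq0 orbb => /eqP.
set s := x2 * x2. set t := d * (x3 * x3).
have y1 : x1*x1 = 2*s - t.
  apply: eq_of_sub; have -> : x1*x1 - (2*s - t) = x1 * x1 - 2 * (x2 * x2) + d * (x3 * x3) by rewrite /s /t; ring.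
  exact: E1.
have y0 : x0*x0 = 3*s - 2*t.
  apply: eq_of_sub; have -> : x0*x0 - (3*s - 2*t) = (x0 * x0 - 2 * (x1 * x1) + x2 * x2) + 2 * (x1*x1 - (2*s - t)) by rewrite /s /t; ring.
  by rewrite E0 y1 subrr; ring.
have y4 : x4*x4 = 2*t - s.
  apply: eq_of_sub; have -> : x4*x4 - (2*t - s) = x2 * x2 - 2%:~R * d * (x3 * x3) + x4 * x4 by rewrite /s /t; ring.
  exact: E2.
have g0 : a*(3*s-2*t) = 0 by rewrite -y0 mulrA h0 mul0r.
have g1 : (b-2*a)*(2*s-t) = 0 by rewrite -y1 mulrA h1 mul0r.
have g2 : (a-2*b+c)*s = 0 by rewrite /s mulrA h2 mul0r.
have g3 : (b-2*c)*t = 0.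
  have -> : (b-2*c)*t = ((b-2*c)*(d*x3))*x3 by rewrite /t; ring.
  by rewrite h3 mul0r.
have g4 : c*(2*t-s) = 0 by rewrite -y4 mulrA h4 mul0r.
have st : (s != 0) || (t != 0).
  have [s0|] := eqVneq s 0; last by [].
  have [t0|] := eqVneq t 0; last by rewrite orbT.
  exfalso.
  have X2 : x2 = 0 by apply: sq0.
  have X3 : x3 = 0 by apply: sq0; apply: (cancel_l t0 nd).
  have X1 : x1 = 0 by apply: sq0; rewrite y1 s0 t0; ring.
  have X0 : x0 = 0 by apply: sq0; rewrite y0 s0 t0; ring.
  have X4 : x4 = 0 by apply: sq0; rewrite y4 s0 t0; ring.
  move: xj; rewrite -(inord_val j); case: j => [[|[|[|[|[|k]]]]] hk] //=.
  - by rewrite -/x0 X0 eqxx.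
  - by rewrite -/x1 X1 eqxx.
  - by rewrite -/x2 X2 eqxx.
  - by rewrite -/x3 X3 eqxx.
  - by rewrite -/x4 X4 eqxx.
have [a0 b0 c0] := key _ _ _ _ _ _ n2 n3 g0 g1 g2 g3 g4 st.
apply/rowP => k; rewrite mxE; case: k => [[|[|[|k]]] hk] //.
- by rewrite (_ : Ordinal hk = ord0) //; apply: val_inj.
- by rewrite (_ : Ordinal hk = lift ord0 ord0) //; apply: val_inj.
- by rewrite (_ : Ordinal hk = lift ord0 (lift ord0 ord0)) //; apply: val_inj.
Qed.
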